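(* Let $0<\nu<1$ and $0\le \mu<1$. Then for every $t>0$, $$f_{\nu,\mu}(t)=\frac{1}{\pi}\int_0^\infty u^{-\mu}\,\exp\!\big(-ut-u^{\nu}\cos(\pi\nu)\big)\,\sin\!\big(u^{\nu}\sin(\pi\nu)+\pi\mu\big)\,du .$$
   Context: For $0<\nu<1$ and real $\rho$, $f_{\nu,\rho}$ denotes the inverse Laplace transform of $F(s)=s^{-\rho}e^{-s^{\nu}}$, i.e. $f_{\nu,\rho}(t)=\frac{1}{2\pi i}\int_{c-i\infty}^{c+i\infty}e^{st}s^{-\rho}e^{-s^{\nu}}\,ds$ for $t>0$, $c>0$, with principal branches of the powers of $s$; thus $\int_0^\infty e^{-st}f_{\nu,\rho}(t)\,dt=s^{-\rho}e^{-s^\nu}$. *)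

(* Defs.v *)
From Stdlib Require Import Reals Lra.
From Coquelicot Require Import Coquelicot.
Open Scope R_scope.

(* Principal argument of a complex number, in (-PI, PI]. *)
Definition Carg (z : C) : R :=
  let x := fst z in let y := snd z in
  if Rlt_dec 0 x then atan (y / x)
  else if Rlt_dec x 0 then
    (if Rle_dec 0 y then atan (y / x) + PI else atan (y / x) - PI)
  else if Rlt_dec 0 y then PI / 2
  else if Rlt_dec y 0 then - (PI / 2)
  else 0.

Definition Cexp (z : C) : C :=
  (exp (fst z) * cos (snd z), exp (fst z) * sin (snd z)).

(* Principal power z^a = exp (a * Log z), real exponent a, for z <> 0. *)
Definition Cpow (z : C) (a : R) : C :=
  (exp (a * ln (Cmod z)) * cos (a * Carg z),
   exp (a * ln (Cmod z)) * sin (a * Carg z)).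

(* Integrand of the Bromwich integral along s = c + i y, after ds = i dy:
   (1/(2 pi i)) e^{st} s^{-rho} e^{-s^nu} ds = (1/(2 pi)) e^{st} s^{-rho} e^{-s^nu} dy. *)
Definition bromwich_integrand (nu rho c t : R) (y : R) : C :=
  let s : C := (c, y) in
  Cmult (RtoC (/ (2 * PI)))
    (Cmult (Cexp (Cmult s (RtoC t)))
       (Cmult (Cpow s (- rho)) (Cexp (Copp (Cpow s nu))))).

(* v is the value f_{nu,rho}(t) of the inverse Laplace transform of
   s^{-rho} e^{-s^nu}, computed by the Bromwich integral on the line Re s = c. *)
Definition inv_laplace_value (nu rho c t : R) (v : C) : Prop :=
  is_RInt_gen (bromwich_integrand nu rho c t)
    (Rbar_locally m_infty) (Rbar_locally p_infty) v.

Definition rhs_integrand (nu mu t : R) (u : R) : R :=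
  / PI * (Rpower u (- mu) * exp (- (u * t) - Rpower u nu * cos (PI * nu))
          * sin (Rpower u nu * sin (PI * nu) + PI * mu)).

(* Main.v *)
Require Import Defs.
From Stdlib Require Import Reals Lra ZArith Lia.
From Coquelicot Require Import Coquelicot.
Open Scope R_scope.

Section Fns.
Variables (nu mu t : R).
Definition pw (r a : R) := exp (a * ln r).
Definition FA (r th : R) := t * r * cos th - mu * ln r - pw r nu * cos (nu * th).
Definition FB (r th : R) := t * r * sin th - mu * th - pw r nu * sin (nu * th).
Definition Q2 (r th : R) := exp (FA r th) * sin (FB r th + th).
Definition S2 (r th : R) := r * exp (FA r th) * cos (FB r th + th).
Definition dQ2 (r th : R) := exp (FA r th) *
  ((- (t * r * sin th) + nu * pw r nu * sin (nu * th)) * sin (FB r th + th)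
   + (t * r * cos th - mu - nu * pw r nu * cos (nu * th) + 1) * cos (FB r th + th)).

Lemma Q2_deriv r th : 0 < r -> is_derive (fun u => Q2 r u) th (dQ2 r th).
Proof.
  intros Hr. unfold Q2, dQ2, FA, FB, pw.
  auto_derive. auto.
  unfold Rminus. ring.
Qed.

Lemma S2_deriv r th : 0 < r -> is_derive (fun u => S2 u th) r (dQ2 r th).
Proof.
  intros Hr. unfold S2, dQ2, FA, FB, pw.
  auto_derive. auto.
  unfold Rminus. field. lra.
Qed.
End Fns.

Lemma cont_exp x : continuity_pt exp x.
Proof. apply derivable_continuous_pt, derivable_pt_exp. Qed.
Lemma cont_ln x : 0 < x -> continuity_pt ln x.
Proof. intros H. apply derivable_continuous_pt. exists (/x). now apply derivable_pt_lim_ln. Qed.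
Lemma cont_sin x : continuity_pt sin x.
Proof. apply continuity_sin. Qed.
Lemma cont_cos x : continuity_pt cos x.
Proof. apply continuity_cos. Qed.

Ltac c2d := repeat (first [ apply continuity_2d_pt_const | apply continuity_2d_pt_id1 | apply continuity_2d_pt_id2
  | apply continuity_2d_pt_plus | apply continuity_2d_pt_minus | apply continuity_2d_pt_mult | apply continuity_2d_pt_opp
  | apply (continuity_1d_2d_pt_comp exp); [apply cont_exp|]
  | apply (continuity_1d_2d_pt_comp sin); [apply cont_sin|]
  | apply (continuity_1d_2d_pt_comp cos); [apply cont_cos|]
  | apply (continuity_1d_2d_pt_comp ln); [apply cont_ln; simpl; try lra|] ]).

Lemma dQ2_cont nu mu t th r : 0 < r -> continuity_2d_pt (fun u v => dQ2 nu mu t v u) th r.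
Proof. intros Hr. unfold dQ2, FA, FB, pw. c2d. Qed.
Lemma Q2_cont nu mu t th r : 0 < r -> continuity_2d_pt (fun u v => Q2 nu mu t v u) th r.
Proof. intros Hr. unfold Q2, FA, FB, pw. c2d. Qed.
Lemma S2_cont nu mu t th r : 0 < r -> continuity_2d_pt (fun u v => S2 nu mu t v u) th r.
Proof. intros Hr. unfold S2, FA, FB, pw. c2d. Qed.

Lemma cpt_cont f x : continuity_pt f x -> continuous f x.
Proof. intros H. now apply continuity_pt_filterlim. Qed.
Lemma cont_cpt f x : continuous f x -> continuity_pt f x.
Proof. intros H. now apply continuity_pt_filterlim. Qed.

Lemma c2d_comp (F : R->R->R) (f g : R->R) x :
  continuous f x -> continuous g x -> continuity_2d_pt F (f x) (g x) ->
  continuous (fun z => F (f z) (g z)) x.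
Proof.
  intros Hf Hg HF. apply (continuous_comp_2 f g F); auto.
  now apply continuity_2d_pt_filterlim.
Qed.

Lemma c2d_snd (F : R->R->R) x y : continuity_2d_pt F x y -> continuous (fun v => F x v) y.
Proof.
  intros H. apply (c2d_comp F (fun _ => x) (fun v => v)); auto.
  apply continuous_const. apply continuous_id.
Qed.
Lemma c2d_fst (F : R->R->R) x y : continuity_2d_pt F x y -> continuous (fun u => F u y) x.
Proof.
  intros H. apply (c2d_comp F (fun u => u) (fun _ => y)); auto.
  apply continuous_id. apply continuous_const.
Qed.

Lemma loc2d_pos (P : R->R->Prop) x y : 0 < y -> (forall u v, 0 < v -> P u v) -> locally_2d P x y.
Proof.
  intros Hy H. exists (mkposreal (y/2) ltac:(lra)). simpl. intros u v _ Hv.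
  apply H. apply Rabs_def2 in Hv. lra.
Qed.

Section Green.
Variables (Q S dQ : R -> R -> R).
Hypothesis HQd : forall r th, 0 < r -> is_derive (fun u => Q r u) th (dQ r th).
Hypothesis HSd : forall r th, 0 < r -> is_derive (fun u => S u th) r (dQ r th).
Hypothesis HdQc : forall r th, 0 < r -> continuity_2d_pt (fun u v => dQ v u) th r.
Hypothesis HQc : forall r th, 0 < r -> continuity_2d_pt (fun u v => Q v u) th r.
Hypothesis HSc : forall r th, 0 < r -> continuity_2d_pt (fun u v => S v u) th r.

Lemma DerQ_cont r th : 0 < r -> continuity_2d_pt (fun u v => Derive (fun z => Q v z) u) th r.
Proof.
  intros Hr. eapply continuity_2d_pt_ext_loc. 2: apply (HdQc r th Hr).
  apply loc2d_pos; auto. intros u v Hv. symmetry. apply is_derive_unique. auto.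
Qed.

Lemma W_deriv (h : R -> R) dh eps th : 0 < eps -> eps < h th -> is_derive h th dh ->
  is_derive (fun x => RInt (fun r => Q r x) eps (h x)) th
    (S (h th) th - S eps th + Q (h th) th * dh).
Proof.
  intros He Hh Hd.
  assert (HQr : forall r x, 0 < r -> continuous (fun r => Q r x) r).
  { intros r x Hr. apply (c2d_snd (fun u v => Q v u)). auto. }
  assert (E : RInt (fun t => Derive (fun u => Q t u) th) eps (h th) = S (h th) th - S eps th).
  { rewrite (RInt_ext _ (fun t => dQ t th)).
    2:{ intros z Hz. rewrite Rmin_left in Hz by lra. apply is_derive_unique. apply HQd. lra. }
    apply is_RInt_unique. apply (is_RInt_derive (fun r => S r th)).
    - intros z Hz. rewrite Rmin_left in Hz by lra. apply HSd. lra.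
    - intros z Hz. rewrite Rmin_left in Hz by lra. apply (c2d_snd (fun u v => dQ v u)). apply HdQc. lra. }
  rewrite <- E.
  apply (is_derive_RInt_param_bound_comp_aux3 (fun x r => Q r x) eps h th dh).
    - apply filter_forall. intros y. apply (ex_RInt_continuous (V:=R_CompleteNormedModule)). intros z Hz.
      apply HQr. rewrite Rmin_left in Hz; lra.
    - exists (mkposreal (eps/2) ltac:(lra)). apply filter_forall. intros y.
      apply (ex_RInt_continuous (V:=R_CompleteNormedModule)). intros z Hz. simpl in Hz.
      apply HQr. rewrite Rmin_left in Hz; lra.
    - auto.
    - exists (mkposreal (eps/2) ltac:(lra)). apply filter_forall. intros y z Hz.
      simpl in Hz. eexists. apply HQd.
      assert (Rmin eps (h th - eps/2) > 0). { apply Rmin_case; lra. } lra.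
    - intros z Hz. apply DerQ_cont. rewrite Rmin_left in Hz; lra.
    - apply loc2d_pos. lra. intros u v Hv. now apply DerQ_cont.
    - apply cont_cpt. apply HQr. lra.
Qed.

Lemma green (h dh : R -> R) eps a b : 0 < eps -> a <= b ->
  (forall th, a <= th <= b -> eps < h th /\ is_derive h th (dh th) /\ continuous dh th) ->
  RInt (fun th => S (h th) th - S eps th + Q (h th) th * dh th) a b
  = RInt (fun r => Q r b) eps (h b) - RInt (fun r => Q r a) eps (h a).
Proof.
  intros He Hab Hh.
  apply is_RInt_unique.
  apply (is_RInt_derive (fun x => RInt (fun r => Q r x) eps (h x))).
  - intros x Hx. rewrite Rmin_left, Rmax_right in Hx by lra.
    destruct (Hh x Hx) as [H1 [H2 H3]]. now apply W_deriv.
  - intros x Hx. rewrite Rmin_left, Rmax_right in Hx by lra.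
    destruct (Hh x Hx) as [H1 [H2 H3]].
    assert (Hhc : continuous h x). { apply (ex_derive_continuous (K:=R_AbsRing) (V:=R_NormedModule)). eexists; eauto. }
    apply cpt_cont. apply continuity_pt_plus. apply continuity_pt_minus.
    + apply cont_cpt. apply (c2d_comp (fun u v => S v u) (fun z => z) h);
      [apply continuous_id | exact Hhc | apply HSc; lra].
    + apply cont_cpt. apply (c2d_comp (fun u v => S v u) (fun z => z) (fun _ => eps));
      [apply continuous_id | apply continuous_const | apply HSc; lra].
    + apply continuity_pt_mult. 2: now apply cont_cpt.
      apply cont_cpt. apply (c2d_comp (fun u v => Q v u) (fun z => z) h);
      [apply continuous_id | exact Hhc | apply HQc; lra].
Qed.

End Green.

Lemma exR (f : R -> R) a b : (forall z, Rmin a b <= z <= Rmax a b -> continuous f z) -> ex_RInt f a b.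
Proof. apply (ex_RInt_continuous (V:=R_CompleteNormedModule)). Qed.

Lemma contR_derive (f : R -> R) x : ex_derive f x -> continuous f x.
Proof. apply (ex_derive_continuous (K:=R_AbsRing) (V:=R_NormedModule)). Qed.

Section Ident.
Variables (nu mu t c : R).
Hypothesis Hc : 0 < c.

Notation Q := (Q2 nu mu t).
Notation S := (S2 nu mu t).

Lemma S_cont_th r th : 0 < r -> continuous (fun u => S r u) th.
Proof. intros Hr. apply (c2d_fst (fun u v => S v u) th r). now apply S2_cont. Qed.
Lemma Q_cont_r r th : 0 < r -> continuous (fun v => Q v th) r.
Proof. intros Hr. apply (c2d_snd (fun u v => Q v u) th r). now apply Q2_cont. Qed.

Definition h1 th := c / cos th.
Definition dh1 th := c * sin th / (cos th * cos th).
Definition L1 th := S (h1 th) th + Q (h1 th) th * dh1 th.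

Lemma green_gen h dh eps a b : 0 < eps -> a <= b ->
  (forall th, a <= th <= b -> eps < h th /\ is_derive h th (dh th) /\ continuous dh th) ->
  RInt (fun th => S (h th) th - S eps th + Q (h th) th * dh th) a b
  = RInt (fun r => Q r b) eps (h b) - RInt (fun r => Q r a) eps (h a).
Proof.
  apply (green Q S (dQ2 nu mu t)).
  - intros; now apply Q2_deriv.
  - intros; now apply S2_deriv.
  - intros; now apply dQ2_cont.
  - intros; now apply Q2_cont.
  - intros; now apply S2_cont.
Qed.

Lemma Q_zero r : Q r 0 = 0.
Proof. unfold Q2. replace (FB nu mu t r 0 + 0) with 0. rewrite sin_0; ring.
  unfold FB. rewrite !Rmult_0_r, !sin_0. ring. Qed.

Lemma comp_cont h th : 0 < h th -> continuous h th ->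
  continuous (fun z => S (h z) z) th /\ continuous (fun z => Q (h z) z) th.
Proof.
  intros H1 H2. split.
  - apply (c2d_comp (fun u v => S v u) (fun z => z) h); [apply continuous_id | exact H2 | now apply S2_cont].
  - apply (c2d_comp (fun u v => Q v u) (fun z => z) h); [apply continuous_id | exact H2 | now apply Q2_cont].
Qed.

Lemma h1_props eps th : 0 < eps < c -> 0 <= th < PI/2 ->
  eps < h1 th /\ is_derive h1 th (dh1 th) /\ continuous dh1 th.
Proof.
  intros He Hth. pose proof PI_RGT_0 as HPI.
  assert (Hc0 : 0 < cos th) by (apply cos_gt_0; lra).
  assert (Hc1 : cos th <= 1) by apply COS_bound.
  split; [|split].
  - unfold h1. apply Rlt_le_trans with c. lra.
    apply Rmult_le_reg_r with (cos th); auto. unfold Rdiv. rewrite Rmult_assoc, Rinv_l by lra. nra.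
  - unfold h1, dh1. auto_derive. lra. field. lra.
  - apply contR_derive. unfold dh1. auto_derive. nra.
Qed.

Lemma key eps b : 0 < eps < c -> c < b ->
  RInt (fun r => Q r PI) eps b =
  RInt L1 0 (acos (c/b)) - RInt (fun th => S eps th) 0 PI + RInt (fun th => S b th) (acos (c/b)) PI.
Proof.
  intros He Hb. pose proof PI_RGT_0 as HPI.
  set (be := acos (c/b)).
  assert (Hcb : 0 < c/b < 1). { split. apply Rdiv_lt_0_compat; lra.
    apply Rmult_lt_reg_r with b. lra. unfold Rdiv. rewrite Rmult_assoc, Rinv_l by lra. lra. }
  assert (Hcos : cos be = c/b) by (apply cos_acos; lra).
  assert (Hbe : 0 < be < PI/2).
  { destruct (acos_bound_lt (c/b)) as [H1 H2]; try lra. fold be in H1, H2. split; auto.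
    destruct (Rlt_le_dec be (PI/2)); auto.
    assert (cos be <= 0) by (apply cos_le_0; lra). lra. }
  assert (Hh1 : h1 be = b). { unfold h1. rewrite Hcos. field. split; lra. }
  assert (G1 := green_gen h1 dh1 eps 0 be ltac:(lra) ltac:(lra)
    (fun th Hth => h1_props eps th He ltac:(lra))).
  assert (G2 := green_gen (fun _ => b) (fun _ => 0) eps be PI ltac:(lra) ltac:(lra)).
  specialize (G2 (fun th Hth => conj (ltac:(lra) : eps < b) (conj (is_derive_const b th) (continuous_const 0 th)))).
  rewrite Hh1 in G1.
  rewrite (RInt_ext (fun r => Q r 0) (fun _ => 0)) in G1 by (intros; apply Q_zero).
  rewrite RInt_const in G1.
  replace (scal (h1 0 - eps) 0) with 0 in G1 by (unfold scal; simpl; unfold mult; simpl; ring).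
  assert (ExL : ex_RInt L1 0 be).
  { apply exR. intros z Hz. rewrite Rmin_left, Rmax_right in Hz by lra.
    destruct (h1_props eps z He ltac:(lra)) as [P1 [P2 P3]].
    assert (Hhc : continuous h1 z) by (apply contR_derive; eexists; eauto).
    destruct (comp_cont h1 z ltac:(lra) Hhc) as [C1 C2].
    unfold L1. apply cpt_cont. apply continuity_pt_plus. now apply cont_cpt.
    apply continuity_pt_mult; now apply cont_cpt. }
  assert (ExS : forall r a b, 0 < r -> ex_RInt (fun th => S r th) a b).
  { intros r a0 b0 Hr. apply exR. intros; now apply S_cont_th. }
  rewrite (RInt_ext _ (fun th => minus (L1 th) (S eps th))) in G1.
  2:{ intros x _. unfold L1, minus, plus, opp. simpl. ring. }
  rewrite (RInt_ext _ (fun th => minus (S b th) (S eps th))) in G2.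
  2:{ intros x _. unfold minus, plus, opp. simpl. ring. }
  rewrite (RInt_minus (V:=R_CompleteNormedModule)) in G1 by (auto; apply ExS; lra).
  rewrite (RInt_minus (V:=R_CompleteNormedModule)) in G2 by (apply ExS; lra).
  rewrite <- (RInt_Chasles (V:=R_CompleteNormedModule) (fun th => S eps th) 0 be PI) by (apply ExS; lra).
  unfold minus, plus, opp in *. simpl in *.
  change (fun th => S2 nu mu t eps th) with (S2 nu mu t eps).
  change (fun th => S2 nu mu t b th) with (S2 nu mu t b).
  unfold scal in G1. simpl in G1. unfold mult in G1; simpl in G1. rewrite Rmult_0_r in G1.
  revert G1 G2. generalize (RInt (fun r => Q2 nu mu t r PI) eps b) (RInt (fun r => Q2 nu mu t r be) eps b)
   (RInt L1 0 be) (RInt (S2 nu mu t eps) 0 be) (RInt (S2 nu mu t eps) be PI) (RInt (S2 nu mu t b) be PI).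
  simpl. intros. lra.
Qed.

End Ident.

Section Conv.
Variables (nu mu t c : R).
Hypothesis Hc : 0 < c.

Definition gR y := exp (FA nu mu t (Cmod (c,y)) (atan (y/c))) * cos (FB nu mu t (Cmod (c,y)) (atan (y/c))).
Definition gI y := exp (FA nu mu t (Cmod (c,y)) (atan (y/c))) * sin (FB nu mu t (Cmod (c,y)) (atan (y/c))).

Lemma Cmod_tan th : -PI/2 < th < PI/2 -> Cmod (c, c * tan th) = c / cos th.
Proof.
  intros H. assert (Hc0 : 0 < cos th) by (apply cos_gt_0; lra).
  unfold Cmod. simpl. rewrite <- (sqrt_pow2 (c / cos th)).
  2:{ apply Rlt_le, Rdiv_lt_0_compat; lra. }
  f_equal. unfold tan. field_simplify. 2: lra.
  pose proof (sin2_cos2 th). unfold Rsqr in H0. 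
  replace (c ^ 2 * sin th ^ 2 + c ^ 2 * cos th ^ 2) with (c^2 * (sin th * sin th + cos th * cos th)) by ring.
  rewrite H0. field. lra. lra.
Qed.

Lemma L1_eq th : -PI/2 < th < PI/2 -> L1 nu mu t c th = gR (c * tan th) * (c / (cos th * cos th)).
Proof.
  intros H. assert (Hc0 : 0 < cos th) by (apply cos_gt_0; lra).
  unfold gR. rewrite Cmod_tan by auto.
  replace (c * tan th / c) with (tan th) by (field; lra).
  rewrite atan_tan by lra.
  unfold L1, h1, dh1, S2, Q2.
  set (A := FA nu mu t (c / cos th) th). set (B := FB nu mu t (c / cos th) th).
  replace (cos B) with (cos (B + th - th)) by (f_equal; ring).
  rewrite cos_minus. field. lra.
Qed.

Lemma gR_cont y : continuous gR y.
Proof.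
  apply contR_derive. unfold gR, FA, FB, pw, Cmod. simpl.
  assert (0 < c^2 + y^2) by nra.
  auto_derive. repeat split; try lra.
  apply sqrt_lt_R0. lra.
  apply sqrt_lt_R0. lra.
  apply sqrt_lt_R0. lra.
Qed.

Lemma gI_cont y : continuous gI y.
Proof.
  apply contR_derive. unfold gI, FA, FB, pw, Cmod. simpl.
  assert (0 < c^2 + y^2) by nra.
  auto_derive. repeat split; try lra.
  apply sqrt_lt_R0. lra.
  apply sqrt_lt_R0. lra.
  apply sqrt_lt_R0. lra.
Qed.

Lemma RInt_L1 be : 0 <= be < PI/2 -> RInt (L1 nu mu t c) 0 be = RInt gR 0 (c * tan be).
Proof.
  intros Hb. pose proof PI_RGT_0.
  assert (E := RInt_comp (V:=R_CompleteNormedModule) gR (fun x => c * tan x) (fun x => c / (cos x * cos x)) 0 be).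
  cbv beta in E. rewrite tan_0, Rmult_0_r in E. rewrite <- E.
  - apply RInt_ext. intros x Hx. rewrite Rmin_left, Rmax_right in Hx by lra.
    rewrite L1_eq by lra. unfold scal; simpl; unfold mult; simpl. ring.
  - intros. apply gR_cont.
  - intros x Hx. rewrite Rmin_left, Rmax_right in Hx by lra.
    assert (0 < cos x) by (apply cos_gt_0; lra). split.
    + unfold tan. auto_derive. lra.
      pose proof (sin2_cos2 x). unfold Rsqr in H1.
      apply Rmult_eq_reg_r with (cos x * cos x). 2: nra.
      field_simplify; try lra. nra.
    + apply contR_derive. auto_derive. nra.
Qed.

Lemma Q_PI r : 0 < r -> Q2 nu mu t r PI = PI * rhs_integrand nu mu t r.
Proof.
  intros Hr. pose proof PI_RGT_0.
  unfold Q2, rhs_integrand, FA, FB, pw, Rpower.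
  rewrite cos_PI, sin_PI. replace (nu * PI) with (PI * nu) by ring.
  set (E := exp (nu * ln r)).
  replace (t * r * 0 - mu * PI - E * sin (PI * nu) + PI) with
    (- (E * sin (PI * nu) + PI * mu) + PI) by ring.
  rewrite neg_sin, sin_neg.
  replace (t * r * -1 - mu * ln r - E * cos (PI * nu)) with
   (- mu * ln r + (- (r * t) - E * cos (PI * nu))) by ring.
  rewrite exp_plus. field. lra.
Qed.

Lemma Cmod_c y : Cmod (c, y) = c * sqrt (1 + (y/c)²).
Proof.
  unfold Cmod. cbn [fst snd].
  replace (c^2 + y^2) with (c^2 * (1 + (y/c)²)) by (unfold Rsqr; field; lra).
  rewrite sqrt_mult_alt, sqrt_pow2; try lra. apply pow_le; lra.
Qed.

Lemma Hrc y : Cmod (c, y) * cos (atan (y/c)) = c.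
Proof.
  rewrite Cmod_c, cos_atan. assert (0 < sqrt (1 + (y/c)²)).
  { apply sqrt_lt_R0. pose proof (Rle_0_sqr (y/c)). lra. }
  field. lra.
Qed.
Lemma Hrs y : Cmod (c, y) * sin (atan (y/c)) = y.
Proof.
  rewrite Cmod_c, sin_atan. assert (0 < sqrt (1 + (y/c)²)).
  { apply sqrt_lt_R0. pose proof (Rle_0_sqr (y/c)). lra. }
  field. lra.
Qed.

Lemma pmul a1 b1 a2 b2 : Cmult (a1 * cos b1, a1 * sin b1) (a2 * cos b2, a2 * sin b2)
  = (a1 * a2 * cos (b1 + b2), a1 * a2 * sin (b1 + b2)).
Proof. unfold Cmult. simpl. rewrite cos_plus, sin_plus. f_equal; ring. Qed.

Lemma brom_eq y : bromwich_integrand nu mu c t y = (/ (2 * PI) * gR y, / (2 * PI) * gI y).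
Proof.
  unfold bromwich_integrand, Defs.Cexp, Defs.Cpow, Defs.Carg. simpl fst; simpl snd.
  destruct (Rlt_dec 0 c) as [_|Hn]; [|lra].
  rewrite !pmul.
  set (r := Cmod (c, y)). set (ph := atan (y / c)).
  assert (EA : FA nu mu t r ph = (c * t - y * 0) + ((- mu) * ln r + - (exp (nu * ln r) * cos (nu * ph)))).
  { unfold FA, pw. replace (t * r * cos ph) with (t * (r * cos ph)) by ring.
    unfold r, ph. rewrite Hrc. ring. }
  assert (EB : FB nu mu t r ph = (c * 0 + y * t) + ((- mu) * ph + - (exp (nu * ln r) * sin (nu * ph)))).
  { unfold FB, pw. replace (t * r * sin ph) with (t * (r * sin ph)) by ring.
    unfold r, ph. rewrite Hrs. ring. }
  unfold gR, gI. fold r ph. rewrite EA, EB, !exp_plus.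
  unfold Cmult, RtoC. simpl. f_equal; ring.
Qed.

End Conv.

Lemma exp_le x y : x <= y -> exp x <= exp y.
Proof. intros [H|H]. apply Rlt_le, exp_increasing, H. subst; lra. Qed.
Lemma ln_le x y : 0 < x -> x <= y -> ln x <= ln y.
Proof. intros H [H1|H1]. apply Rlt_le, ln_increasing; auto. subst; lra. Qed.
Lemma ln_u u : 0 < u -> ln u <= u - 1.
Proof. intros H. pose proof (exp_ineq1_le (ln u)). rewrite exp_ln in H0; lra. Qed.
Lemma cos_le_dec x y : 0 <= x -> x <= y -> y <= PI -> cos y <= cos x.
Proof. intros H1 [H2|H2] H3. apply Rlt_le, cos_decreasing_1; lra. subst; lra. Qed.

Lemma decay nu q k : 0 < nu -> 0 < q -> 0 < k -> forall r, 0 < r ->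
  exp (q * ln r) * exp (- (k * exp (nu * ln r))) <= exp ((q/nu) * ln ((q/nu)/k) - q/nu).
Proof.
  intros Hn Hq Hk r Hr. rewrite <- exp_plus. apply exp_le.
  set (w := exp (nu * ln r)). set (p := q / nu).
  assert (Hw : 0 < w) by apply exp_pos.
  assert (Hp : 0 < p) by (apply Rdiv_lt_0_compat; lra).
  assert (E1 : q * ln r = p * ln w). { unfold w, p. rewrite ln_exp. field. lra. }
  rewrite E1.
  assert (H := ln_u (w * (k / p)) ltac:(apply Rmult_lt_0_compat; auto; apply Rdiv_lt_0_compat; lra)).
  rewrite ln_mult in H by (auto; apply Rdiv_lt_0_compat; lra).
  replace (k / p) with (/ (p / k)) in H by (field; lra).
  rewrite ln_Rinv in H by (apply Rdiv_lt_0_compat; lra).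
  apply Rmult_le_compat_l with (r := p) in H; [|lra].
  replace (p * (w * / (p / k) - 1)) with (k * w - p) in H by (field; lra).
  lra.
Qed.

Lemma RInt_inv2 K m n : 0 < m -> m <= n -> RInt (fun y => K / (y * y)) m n = K / m - K / n.
Proof.
  intros Hm Hn. apply is_RInt_unique.
  replace (K / m - K / n) with (minus ((fun y => - K / y) n) ((fun y => - K / y) m))
    by (unfold minus, plus, opp; simpl; field; lra).
  apply (is_RInt_derive (V:=R_CompleteNormedModule)).
  - intros x Hx. rewrite Rmin_left, Rmax_right in Hx by lra. auto_derive. lra. field. lra.
  - intros x Hx. rewrite Rmin_left, Rmax_right in Hx by lra. apply contR_derive. auto_derive. nra.
Qed.

Lemma tail (f : R -> R) K m n : (forall y, continuous f y) -> (forall y, 1 <= y -> Rabs (f y) <= K / (y * y)) ->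
  1 <= m -> m <= n -> Rabs (RInt f m n) <= K / m.
Proof.
  intros Hc Hb Hm Hn.
  assert (HK : 0 <= K). { specialize (Hb 1 ltac:(lra)). pose proof (Rabs_pos (f 1)). 
    replace (K / (1 * 1)) with K in Hb by field. lra. }
  eapply Rle_trans. apply abs_RInt_le; auto. apply exR. intros; auto.
  eapply Rle_trans. apply RInt_le with (g := fun y => K / (y * y)); auto.
  - apply exR. intros z _. apply cpt_cont. apply continuity_pt_comp with (f1 := f) (f2 := Rabs).
    now apply cont_cpt. apply Rcontinuity_abs.
  - apply exR. intros z Hz. rewrite Rmin_left, Rmax_right in Hz by lra. apply contR_derive. auto_derive. nra.
  - intros x Hx. apply Hb. lra.
  - rewrite RInt_inv2 by lra. assert (0 <= K / n). { apply Rmult_le_pos; auto. apply Rlt_le, Rinv_0_lt_compat; lra. } lra.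
Qed.

Lemma conv (f : R -> R) K : (forall y, continuous f y) -> (forall y, 1 <= y -> Rabs (f y) <= K / (y * y)) ->
  exists L, forall e, 0 < e -> exists M, 1 <= M /\ forall Y, M <= Y -> Rabs (RInt f 0 Y - L) < e.
Proof.
  intros Hc Hb.
  assert (HK : 0 <= K). { specialize (Hb 1 ltac:(lra)). pose proof (Rabs_pos (f 1)). 
    replace (K / (1 * 1)) with K in Hb by field. lra. }
  assert (Ex : forall a b, ex_RInt f a b) by (intros; apply exR; intros; auto).
  assert (Hsplit : forall m n, RInt f 0 n - RInt f 0 m = RInt f m n).
  { intros m n. rewrite <- (RInt_Chasles (V:=R_CompleteNormedModule) f 0 m n) by auto.
    unfold plus; simpl. ring. }
  assert (Harch : forall e, 0 < e -> exists N : nat, K / (INR N + 1) < e).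
  { intros e He. destruct (archimed (K / e)) as [H1 _].
    exists (Z.to_nat (up (K / e))).
    assert (0 <= IZR (up (K/e))). { apply Rle_trans with (K/e). apply Rmult_le_pos; auto. apply Rlt_le, Rinv_0_lt_compat; auto. lra. }
    rewrite INR_IZR_INZ, Z2Nat.id. 2: { apply le_IZR. auto. }
    apply Rmult_lt_reg_r with (IZR (up (K / e)) + 1). lra.
    unfold Rdiv. rewrite Rmult_assoc, Rinv_l by lra.
    apply Rmult_lt_reg_r with (/ e). apply Rinv_0_lt_compat; auto.
    replace (e * (IZR (up (K * / e)) + 1) * / e) with (IZR (up (K * / e)) + 1) by (field; lra).
    unfold Rdiv in H1. lra. }
  set (u := fun n : nat => RInt f 0 (INR n + 1)).
  assert (Hu : Cauchy_crit u).
  { intros e He. destruct (Harch e He) as [N HN]. exists N. intros n m Hn Hm.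
    unfold R_dist, u. rewrite Hsplit.
    assert (Hn' : INR N <= INR n) by (apply le_INR; lia).
    assert (Hm' : INR N <= INR m) by (apply le_INR; lia).
    assert (0 <= INR N) by apply pos_INR.
    assert (HKN : forall x, INR N + 1 <= x -> K / x <= K / (INR N + 1)).
    { intros x Hx. apply Rmult_le_compat_l; auto. apply Rinv_le_contravar; lra. }
    destruct (Rle_lt_dec (INR m) (INR n)).
    - eapply Rle_lt_trans. apply (tail f K); auto; lra. eapply Rle_lt_trans; [apply HKN; lra|]. auto.
    - rewrite <- Rabs_Ropp. rewrite <- opp_RInt_swap by auto. unfold opp; simpl. rewrite Ropp_involutive.
      eapply Rle_lt_trans. apply (tail f K); auto; lra. eapply Rle_lt_trans; [apply HKN; lra|]. auto. }
  destruct (Rcomplete.R_complete u Hu) as [L HL]. exists L.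
  intros e He. destruct (Harch (e/2) ltac:(lra)) as [N1 HN1].
  destruct (HL (e/2) ltac:(lra)) as [N2 HN2].
  set (N := max N1 N2). exists (INR N + 1). split.
  { pose proof (pos_INR N). lra. }
  intros Y HY.
  assert (0 <= INR N) by apply pos_INR.
  replace (RInt f 0 Y - L) with ((u N - L) + (RInt f 0 Y - RInt f 0 (INR N + 1))) by (unfold u; ring).
  rewrite Hsplit. eapply Rle_lt_trans. apply Rabs_triang.
  assert (A1 : Rabs (u N - L) < e/2). { apply HN2. unfold N; lia. }
  assert (A2 : Rabs (RInt f (INR N + 1) Y) <= K / (INR N + 1)) by (apply tail; auto; lra).
  assert (A3 : K / (INR N + 1) <= K / (INR N1 + 1)).
  { apply Rmult_le_compat_l; auto. apply Rinv_le_contravar. pose proof (pos_INR N1); lra.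
    assert (INR N1 <= INR N) by (apply le_INR; unfold N; lia). lra. }
  lra.
Qed.

Lemma abs_cos_le x : Rabs (cos x) <= 1.
Proof. apply Rabs_le. apply COS_bound. Qed.
Lemma abs_sin_le x : Rabs (sin x) <= 1.
Proof. apply Rabs_le. apply SIN_bound. Qed.

Section Est.
Variables (nu mu t c : R).
Hypothesis Hnu : 0 < nu < 1.
Hypothesis Hmu : 0 <= mu < 1.
Hypothesis Ht : 0 < t.
Hypothesis Hc : 0 < c.

Lemma exp2ln r : 0 < r -> exp (2 * ln r) = r * r.
Proof. intros Hr. replace (2 * ln r) with (ln r + ln r) by ring. rewrite exp_plus, exp_ln; auto. Qed.

Definition Kg := exp (t * c) * exp ((2/nu) * ln ((2/nu)/cos (nu * (PI/2))) - 2/nu).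

Lemma g_bound_aux y : 1 <= y -> exp (FA nu mu t (Cmod (c,y)) (atan (y/c))) <= Kg / (y * y).
Proof.
  intros Hy. pose proof PI_RGT_0 as HPI.
  set (r := Cmod (c, y)). set (ph := atan (y / c)).
  assert (Hry : y <= r).
  { unfold r, Cmod. cbn [fst snd]. rewrite <- (sqrt_pow2 y) at 1 by lra.
    apply sqrt_le_1_alt. pose proof (pow2_ge_0 c). lra. }
  assert (Hph : 0 < ph < PI/2).
  { unfold ph. split. rewrite <- atan_0. apply atan_increasing. apply Rdiv_lt_0_compat; lra.
    pose proof (atan_bound (y/c)). lra. }
  assert (Hk : 0 < cos (nu * (PI/2))) by (apply cos_gt_0; nra).
  assert (Hcos : cos (nu * (PI/2)) <= cos (nu * ph)) by (apply cos_le_dec; nra).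
  assert (HA : FA nu mu t r ph <= t * c + - (cos (nu * (PI/2)) * exp (nu * ln r))).
  { unfold FA, pw. replace (t * r * cos ph) with (t * (r * cos ph)) by ring.
    unfold r, ph. rewrite Hrc by auto. fold r ph.
    assert (0 <= ln r). { rewrite <- ln_1. apply ln_le; lra. }
    assert (0 < exp (nu * ln r)) by apply exp_pos. nra. }
  eapply Rle_trans. apply exp_le, HA. rewrite exp_plus. unfold Kg.
  assert (D := decay nu 2 (cos (nu * (PI/2))) ltac:(lra) ltac:(lra) Hk r ltac:(lra)).
  rewrite exp2ln in D by lra.
  set (K0 := exp ((2 / nu) * ln ((2 / nu) / cos (nu * (PI / 2))) - 2 / nu)) in *.
  replace (exp (t * c) * K0 / (y * y)) with (exp (t * c) * (K0 / (y * y))) by (field; nra).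
  apply Rmult_le_compat_l. apply Rlt_le, exp_pos.
  apply Rmult_le_reg_l with (y * y). nra.
  replace (y * y * (K0 / (y * y))) with K0 by (field; nra).
  eapply Rle_trans. 2: apply D. apply Rmult_le_compat_r. apply Rlt_le, exp_pos. nra.
Qed.

Lemma gR_bound y : 1 <= y -> Rabs (gR nu mu t c y) <= Kg / (y * y).
Proof.
  intros Hy. unfold gR. rewrite Rabs_mult, (Rabs_pos_eq (exp _)) by (apply Rlt_le, exp_pos).
  eapply Rle_trans. 2: apply g_bound_aux; auto.
  pose proof (exp_pos (FA nu mu t (Cmod (c, y)) (atan (y / c)))).
  pose proof (abs_cos_le (FB nu mu t (Cmod (c, y)) (atan (y / c)))).
  pose proof (Rabs_pos (cos (FB nu mu t (Cmod (c, y)) (atan (y / c))))).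
  nra.
Qed.

Lemma gI_bound y : 1 <= y -> Rabs (gI nu mu t c y) <= Kg / (y * y).
Proof.
  intros Hy. unfold gI. rewrite Rabs_mult, (Rabs_pos_eq (exp _)) by (apply Rlt_le, exp_pos).
  eapply Rle_trans. 2: apply g_bound_aux; auto.
  pose proof (exp_pos (FA nu mu t (Cmod (c, y)) (atan (y / c)))).
  pose proof (abs_sin_le (FB nu mu t (Cmod (c, y)) (atan (y / c)))).
  pose proof (Rabs_pos (sin (FB nu mu t (Cmod (c, y)) (atan (y / c))))).
  nra.
Qed.
Lemma S2_small eps th : 0 < eps <= 1 -> Rabs (S2 nu mu t eps th) <= exp (t + 1) * exp ((1 - mu) * ln eps).
Proof.
  intros He. unfold S2.
  rewrite !Rabs_mult, (Rabs_pos_eq eps), (Rabs_pos_eq (exp _)) by (try apply Rlt_le, exp_pos; lra).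
  assert (Hl : ln eps <= 0). { rewrite <- ln_1. apply ln_le; lra. }
  assert (Hp : exp (nu * ln eps) <= 1). { rewrite <- exp_0. apply exp_le. nra. }
  assert (HA : FA nu mu t eps th <= (t + 1) + (- mu * ln eps)).
  { unfold FA, pw. pose proof (COS_bound th). pose proof (COS_bound (nu * th)).
    pose proof (exp_pos (nu * ln eps)).
    assert (eps * cos th <= 1) by nra.
    assert (t * eps * cos th <= t) by nra.
    assert (- (exp (nu * ln eps) * cos (nu * th)) <= 1) by nra.
    lra. }
  assert (E1 : exp ((1 - mu) * ln eps) = eps * exp (- mu * ln eps)).
  { replace ((1 - mu) * ln eps) with (ln eps + - mu * ln eps) by ring. rewrite exp_plus, exp_ln; lra. }
  rewrite E1.
  pose proof (abs_cos_le (FB nu mu t eps th + th)). pose proof (Rabs_pos (cos (FB nu mu t eps th + th))).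
  assert (exp (FA nu mu t eps th) <= exp (t + 1) * exp (- mu * ln eps)).
  { rewrite <- exp_plus. apply exp_le. lra. }
  pose proof (exp_pos (FA nu mu t eps th)).
  apply Rle_trans with (eps * exp (FA nu mu t eps th)).
  - rewrite <- (Rmult_1_r (eps * exp (FA nu mu t eps th))) at 2.
    apply Rmult_le_compat_l; auto. apply Rmult_le_pos; lra.
  - replace (exp (t + 1) * (eps * exp (- mu * ln eps))) with (eps * (exp (t + 1) * exp (- mu * ln eps))) by ring.
    apply Rmult_le_compat_l; lra.
Qed.

Lemma E_lim e : 0 < e -> exists d, 0 < d /\ forall eps, 0 < eps < d ->
  Rabs (RInt (fun th => S2 nu mu t eps th) 0 PI) < e.
Proof.
  intros He. pose proof PI_RGT_0 as HPI.
  set (C0 := PI * exp (t + 1)).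
  assert (HC0 : 0 < C0) by (apply Rmult_lt_0_compat; auto; apply exp_pos).
  set (d := Rmin 1 (exp (ln (e / C0) / (1 - mu)))).
  assert (Hd : 0 < d) by (apply Rmin_case; [lra | apply exp_pos]).
  exists d. split; auto. intros eps Heps.
  assert (He1 : eps <= 1) by (pose proof (Rmin_l 1 (exp (ln (e / C0) / (1 - mu)))); fold d in H; lra).
  assert (He2 : eps < exp (ln (e / C0) / (1 - mu))) by (pose proof (Rmin_r 1 (exp (ln (e / C0) / (1 - mu)))); fold d in H; lra).
  assert (H3 : exp ((1 - mu) * ln eps) < e / C0).
  { apply ln_increasing in He2; [|lra]. rewrite ln_exp in He2.
    rewrite <- (exp_ln (e / C0)) by (apply Rdiv_lt_0_compat; lra).
    apply exp_increasing. apply Rmult_lt_reg_r with (/ (1 - mu)). apply Rinv_0_lt_compat; lra.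
    replace ((1 - mu) * ln eps * / (1 - mu)) with (ln eps) by (field; lra). unfold Rdiv in He2. lra. }
  eapply Rle_lt_trans. apply abs_RInt_le_const. lra.
  apply exR. intros; apply S_cont_th; lra.
  intros th _. apply S2_small. lra.
  replace e with (C0 * (e / C0)) by (field; lra). unfold C0.
  replace ((PI - 0) * (exp (t + 1) * exp ((1 - mu) * ln eps))) with (PI * exp (t + 1) * exp ((1 - mu) * ln eps)) by ring.
  apply Rmult_lt_compat_l; auto.
Qed.

Definition ths := PI / (1 + nu).
Definition kap := cos (nu * ths).
Definition del := - cos ths.

Lemma ths_props : PI / 2 < ths < PI /\ 0 < nu * ths < PI / 2.
Proof.
  pose proof PI_RGT_0. unfold ths. split; [split|split].
  - apply Rmult_lt_reg_r with (2 * (1 + nu)). nra. field_simplify; nra.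
  - apply Rmult_lt_reg_r with (1 + nu). lra. field_simplify; nra.
  - apply Rmult_lt_0_compat. lra. apply Rdiv_lt_0_compat; lra.
  - apply Rmult_lt_reg_r with (2 * (1 + nu)). nra. field_simplify; nra.
Qed.

Lemma kap_pos : 0 < kap.
Proof. unfold kap. destruct ths_props. apply cos_gt_0; lra. Qed.
Lemma del_pos : 0 < del.
Proof. unfold del. destruct ths_props. assert (cos ths < 0) by (apply cos_lt_0; lra). lra. Qed.

Lemma S2_big b th : c < b -> acos (c / b) <= th <= PI ->
  Rabs (S2 nu mu t b th) <= exp (t * c) * (exp ((1 - mu) * ln b) * exp (- (kap * exp (nu * ln b))))
     + exp ((1 - mu) * ln b) * exp (- (t * del) * b + exp (nu * ln b)).
Proof.
  intros Hb Hth. pose proof PI_RGT_0 as HPI. destruct ths_props as [T1 T2].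
  pose proof kap_pos. pose proof del_pos.
  assert (Hcb : 0 < c/b < 1). { split. apply Rdiv_lt_0_compat; lra.
    apply Rmult_lt_reg_r with b. lra. unfold Rdiv. rewrite Rmult_assoc, Rinv_l by lra. lra. }
  assert (Hcos : cos (acos (c/b)) = c/b) by (apply cos_acos; lra).
  pose proof (acos_bound (c/b)).
  unfold S2. rewrite !Rabs_mult, (Rabs_pos_eq b), (Rabs_pos_eq (exp _)) by (try apply Rlt_le, exp_pos; lra).
  pose proof (abs_cos_le (FB nu mu t b th + th)). pose proof (Rabs_pos (cos (FB nu mu t b th + th))).
  pose proof (exp_pos (FA nu mu t b th)).
  apply Rle_trans with (b * exp (FA nu mu t b th)).
  { rewrite <- (Rmult_1_r (b * exp (FA nu mu t b th))) at 2.
    apply Rmult_le_compat_l; auto. apply Rmult_le_pos; lra. }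
  assert (Eb : b * exp (FA nu mu t b th) = exp ((1 - mu) * ln b) * exp (FA nu mu t b th + mu * ln b)).
  { rewrite <- exp_plus. replace ((1 - mu) * ln b + (FA nu mu t b th + mu * ln b)) with (ln b + FA nu mu t b th) by ring.
    rewrite exp_plus, exp_ln; lra. }
  rewrite Eb.
  pose proof (exp_pos ((1 - mu) * ln b)). pose proof (exp_pos (nu * ln b)).
  pose proof (exp_pos (- (kap * exp (nu * ln b)))). pose proof (exp_pos (- (t * del) * b + exp (nu * ln b))).
  pose proof (exp_pos (t * c)).
  destruct (Rle_lt_dec th ths) as [Hs|Hs].
  - assert (HA : FA nu mu t b th + mu * ln b <= t * c + - (kap * exp (nu * ln b))).
    { unfold FA, pw.
      assert (Hc1 : cos th <= c / b). { rewrite <- Hcos. apply cos_le_dec; lra. }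
      assert (b * cos th <= c). { apply Rmult_le_reg_r with (/ b). apply Rinv_0_lt_compat; lra.
        replace (b * cos th * / b) with (cos th) by (field; lra). exact Hc1. }
      assert (kap <= cos (nu * th)). { unfold kap. apply cos_le_dec; nra. }
      assert (t * (b * cos th) <= t * c) by (apply Rmult_le_compat_l; lra).
      assert (exp (nu * ln b) * kap <= exp (nu * ln b) * cos (nu * th)) by (apply Rmult_le_compat_l; lra).
      nra. }
    apply exp_le in HA. rewrite (exp_plus (t * c)) in HA.
    assert (0 <= exp ((1 - mu) * ln b) * exp (- (t * del) * b + exp (nu * ln b))) by (apply Rmult_le_pos; lra).
    apply Rle_trans with (exp ((1 - mu) * ln b) * (exp (t * c) * exp (- (kap * exp (nu * ln b))))).
    { apply Rmult_le_compat_l. lra. exact HA. }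
    nra.
  - assert (HA : FA nu mu t b th + mu * ln b <= - (t * del) * b + exp (nu * ln b)).
    { unfold FA, pw, del.
      assert (cos th <= cos ths) by (apply cos_le_dec; lra).
      pose proof (COS_bound (nu * th)).
      assert (t * b * cos th <= t * b * cos ths) by (apply Rmult_le_compat_l; nra).
      assert (- (exp (nu * ln b) * cos (nu * th)) <= exp (nu * ln b)) by nra.
      lra. }
    apply exp_le in HA.
    assert (0 <= exp (t * c) * (exp ((1 - mu) * ln b) * exp (- (kap * exp (nu * ln b))))).
    { apply Rmult_le_pos. lra. apply Rmult_le_pos; lra. }
    apply Rle_trans with (exp ((1 - mu) * ln b) * exp (- (t * del) * b + exp (nu * ln b))).
    apply Rmult_le_compat_l; lra. lra.
Qed.

Lemma e2mu b : 0 < b -> exp ((1 - mu) * ln b) * b = exp ((2 - mu) * ln b).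
Proof. intros Hb. replace ((2 - mu) * ln b) with ((1 - mu) * ln b + ln b) by ring. rewrite exp_plus, exp_ln; auto. Qed.

Lemma T_lim e : 0 < e -> exists M, c < M /\ forall b, M <= b ->
  Rabs (RInt (fun th => S2 nu mu t b th) (acos (c/b)) PI) < e.
Proof.
  intros He. pose proof PI_RGT_0 as HPI. pose proof kap_pos as Hk. pose proof del_pos as Hd.
  set (q := 2 - mu).
  set (K1 := exp ((q/nu) * ln ((q/nu)/kap) - q/nu)).
  set (K2 := exp ((q/1) * ln ((q/1)/(t * del / 2)) - q/1)).
  set (M0 := exp (Rabs (ln (t * del / 2)) / (1 - nu))).
  set (B := PI * (exp (t * c) * K1 + K2)).
  assert (HK1 : 0 < K1) by apply exp_pos. assert (HK2 : 0 < K2) by apply exp_pos.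
  assert (HB : 0 < B). { unfold B. apply Rmult_lt_0_compat; auto. pose proof (exp_pos (t * c)). nra. }
  exists (Rmax (Rmax (c + 1) M0) (B / e + 1)).
  pose proof (Rmax_l (Rmax (c + 1) M0) (B / e + 1)). pose proof (Rmax_r (Rmax (c + 1) M0) (B / e + 1)).
  pose proof (Rmax_l (c + 1) M0). pose proof (Rmax_r (c + 1) M0).
  split. lra. intros b Hb.
  assert (Hb1 : c + 1 <= b) by lra. assert (HbM : M0 <= b) by lra. assert (HbB : B / e + 1 <= b) by lra.
  assert (Hb0 : 0 < b) by lra.
  assert (Hpt : forall th, acos (c/b) <= th <= PI -> Rabs (S2 nu mu t b th) <= (exp (t * c) * K1 + K2) / b).
  { intros th Hth. eapply Rle_trans. apply S2_big; auto. lra.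
    assert (T1 : exp ((1 - mu) * ln b) * exp (- (kap * exp (nu * ln b))) <= K1 / b).
    { apply Rmult_le_reg_r with b; auto. replace (K1 / b * b) with K1 by (field; lra).
      replace (exp ((1 - mu) * ln b) * exp (- (kap * exp (nu * ln b))) * b) with
        (exp (q * ln b) * exp (- (kap * exp (nu * ln b)))) by (unfold q; rewrite <- e2mu; [ring|auto]).
      apply decay; auto; unfold q; lra. }
    assert (Hpw : exp (nu * ln b) <= t * del / 2 * b).
    { rewrite <- (exp_ln b) at 2 by auto. rewrite <- (exp_ln (t * del / 2)) by (apply Rdiv_lt_0_compat; nra).
      rewrite <- exp_plus. apply exp_le.
      assert (Hl : Rabs (ln (t * del / 2)) / (1 - nu) <= ln b).
      { rewrite <- (ln_exp (Rabs (ln (t * del / 2)) / (1 - nu))). apply ln_le. apply exp_pos. exact HbM. }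
      assert (Rabs (ln (t * del / 2)) <= (1 - nu) * ln b).
      { apply Rmult_le_reg_r with (/ (1 - nu)). apply Rinv_0_lt_compat; lra.
        replace ((1 - nu) * ln b * / (1 - nu)) with (ln b) by (field; lra). exact Hl. }
      pose proof (Rabs_maj2 (ln (t * del / 2))). lra. }
    assert (T2 : exp ((1 - mu) * ln b) * exp (- (t * del) * b + exp (nu * ln b)) <= K2 / b).
    { apply Rle_trans with (exp ((1 - mu) * ln b) * exp (- (t * del / 2 * exp (1 * ln b)))).
      { apply Rmult_le_compat_l. apply Rlt_le, exp_pos. apply exp_le.
        rewrite Rmult_1_l, exp_ln by auto. lra. }
      apply Rmult_le_reg_r with b; auto. replace (K2 / b * b) with K2 by (field; lra).
      replace (exp ((1 - mu) * ln b) * exp (- (t * del / 2 * exp (1 * ln b))) * b) with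
        (exp (q * ln b) * exp (- (t * del / 2 * exp (1 * ln b)))) by (unfold q; rewrite <- e2mu; [ring|auto]).
      apply decay; auto; unfold q; try lra. apply Rdiv_lt_0_compat; nra. }
    replace ((exp (t * c) * K1 + K2) / b) with (exp (t * c) * (K1 / b) + K2 / b) by (field; lra).
    pose proof (exp_pos (t * c)).
    apply Rplus_le_compat; auto. apply Rmult_le_compat_l; lra. }
  pose proof (acos_bound (c/b)).
  eapply Rle_lt_trans. apply abs_RInt_le_const. lra.
  apply exR. intros; apply S_cont_th; lra.
  exact Hpt.
  apply Rle_lt_trans with (PI * ((exp (t * c) * K1 + K2) / b)).
  { apply Rmult_le_compat_r. apply Rlt_le, Rdiv_lt_0_compat; auto. pose proof (exp_pos (t * c)). nra. lra. }
  replace (PI * ((exp (t * c) * K1 + K2) / b)) with (B / b) by (unfold B; field; lra).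
  apply Rmult_lt_reg_r with b; auto. unfold Rdiv at 1. rewrite Rmult_assoc, Rinv_l, Rmult_1_r by lra.
  assert (HBe : B / e < b) by lra.
  apply Rmult_lt_reg_r with (/ e). apply Rinv_0_lt_compat; auto.
  replace (e * b * / e) with b by (field; lra). exact HBe.
Qed.

End Est.

Section Main.
Variables (nu mu t c : R).
Hypothesis Hnu : 0 < nu < 1.
Hypothesis Hmu : 0 <= mu < 1.
Hypothesis Ht : 0 < t.
Hypothesis Hc : 0 < c.

Lemma rhs_cont u : 0 < u -> continuous (rhs_integrand nu mu t) u.
Proof.
  intros Hu. apply contR_derive. unfold rhs_integrand, Rpower. auto_derive.
  pose proof PI_RGT_0. repeat split; auto; lra.
Qed.

Lemma Ybound b : c < b -> 0 <= c * tan (acos (c/b)) /\ b - c <= c * tan (acos (c/b)).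
Proof.
  intros Hb.
  assert (Hcb : 0 < c/b < 1). { split. apply Rdiv_lt_0_compat; lra.
    apply Rmult_lt_reg_r with b. lra. unfold Rdiv. rewrite Rmult_assoc, Rinv_l by lra. lra. }
  rewrite tan_acos by lra.
  set (s := sqrt (1 - (c/b)²)).
  assert (Hs0 : 0 <= s) by apply sqrt_pos.
  assert (Hs2 : s * s = 1 - (c/b)²). { apply sqrt_sqrt. unfold Rsqr. nra. }
  replace (c * (s / (c / b))) with (b * s) by (field; lra).
  split. nra.
  assert (E : (b * s) * (b * s) = b * b - c * c). { replace ((b*s)*(b*s)) with (b * b * (s * s)) by ring.
    rewrite Hs2. unfold Rsqr. field. lra. }
  assert (0 <= b * s) by nra. nra.
Qed.

Lemma ident a b : 0 < a < c -> c < b ->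
  PI * RInt (rhs_integrand nu mu t) a b =
  RInt (gR nu mu t c) 0 (c * tan (acos (c/b)))
  - RInt (fun th => S2 nu mu t a th) 0 PI + RInt (fun th => S2 nu mu t b th) (acos (c/b)) PI.
Proof.
  intros Ha Hb. pose proof PI_RGT_0 as HPI.
  assert (Hcb : 0 < c/b < 1). { split. apply Rdiv_lt_0_compat; lra.
    apply Rmult_lt_reg_r with b. lra. unfold Rdiv. rewrite Rmult_assoc, Rinv_l by lra. lra. }
  assert (Hbe : 0 <= acos (c / b) < PI/2).
  { destruct (acos_bound_lt (c/b)) as [H1 H2]; try lra. split. lra.
    destruct (Rlt_le_dec (acos (c/b)) (PI/2)); auto.
    assert (cos (acos (c/b)) <= 0) by (apply cos_le_0; lra). rewrite cos_acos in H by lra. lra. }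
  rewrite <- RInt_L1 by (auto; lra).
  rewrite <- key by auto.
  assert (Ex : ex_RInt (rhs_integrand nu mu t) a b).
  { apply exR. intros z Hz. rewrite Rmin_left, Rmax_right in Hz by lra. apply rhs_cont. lra. }
  rewrite (RInt_ext (fun r => Q2 nu mu t r PI) (fun r => scal PI (rhs_integrand nu mu t r))).
  2:{ intros x Hx. rewrite Rmin_left, Rmax_right in Hx by lra. rewrite Q_PI by lra. reflexivity. }
  rewrite (RInt_scal (V:=R_CompleteNormedModule)) by auto. reflexivity.
Qed.

Lemma rhs_gen LR : (forall e, 0 < e -> exists M, 1 <= M /\ forall Y, M <= Y -> Rabs (RInt (gR nu mu t c) 0 Y - LR) < e) ->
  is_RInt_gen (rhs_integrand nu mu t) (at_right 0) (Rbar_locally p_infty) (LR / PI).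
Proof.
  intros HLR P [e He]. pose proof PI_RGT_0 as HPI. pose proof (cond_pos e) as He0.
  set (e' := PI * e / 3). assert (He' : 0 < e') by (unfold e'; nra).
  destruct (HLR e' He') as [M1 [_ HM1]].
  destruct (T_lim nu mu t c Hnu Hmu Ht Hc e' He') as [M2 [HM2c HM2]].
  destruct (E_lim nu mu t Hnu Hmu Ht e' He') as [d [Hd HdE]].
  apply Filter_prod with (Q := fun a => 0 < a < Rmin d c) (R := fun b => Rmax M2 (M1 + c) < b).
  - unfold at_right, within. exists (mkposreal (Rmin d c) ltac:(apply Rmin_case; lra)).
    intros y Hy Hpos. simpl in Hy. change (Rabs (y - 0) < Rmin d c) in Hy.
    rewrite Rminus_0_r, Rabs_pos_eq in Hy by lra. lra.
  - exists (Rmax M2 (M1 + c)). auto.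
  - intros a b Ha Hb. simpl.
    pose proof (Rmax_l M2 (M1 + c)). pose proof (Rmax_r M2 (M1 + c)).
    pose proof (Rmin_l d c). pose proof (Rmin_r d c).
    exists (RInt (rhs_integrand nu mu t) a b). split.
    + apply (RInt_correct (V:=R_CompleteNormedModule)). apply exR. intros z Hz.
      rewrite Rmin_left, Rmax_right in Hz by lra. apply rhs_cont. lra.
    + apply He. change (Rabs (RInt (rhs_integrand nu mu t) a b - LR / PI) < e).
      assert (Hid := ident a b ltac:(lra) ltac:(lra)).
      destruct (Ybound b ltac:(lra)) as [_ HY].
      assert (A1 := HM1 (c * tan (acos (c / b))) ltac:(lra)).
      assert (A2 := HdE a ltac:(lra)).
      assert (A3 := HM2 b ltac:(lra)).
      revert Hid A1 A2 A3.
      generalize (RInt (rhs_integrand nu mu t) a b) (RInt (gR nu mu t c) 0 (c * tan (acos (c / b))))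
        (RInt (fun th => S2 nu mu t a th) 0 PI) (RInt (fun th => S2 nu mu t b th) (acos (c / b)) PI).
      simpl. intros X G E T Hid A1 A2 A3.
      replace (X - LR / PI) with (((G - LR) - E + T) / PI).
      2:{ apply Rmult_eq_reg_l with PI. 2: lra. replace (PI * (X - LR / PI)) with (PI * X - LR) by (field; lra). rewrite Hid. field. lra. }
      unfold Rdiv. rewrite Rabs_mult, (Rabs_pos_eq (/ PI)) by (apply Rlt_le, Rinv_0_lt_compat; lra).
      apply Rmult_lt_reg_r with PI; auto. rewrite Rmult_assoc, Rinv_l, Rmult_1_r by lra.
      eapply Rle_lt_trans. apply Rabs_triang. 
      pose proof (Rabs_triang (G - LR) (- E)). rewrite Rabs_Ropp in H3.
      unfold e' in *. unfold Rminus in *. lra.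
Qed.

Lemma gR_even y : gR nu mu t c (- y) = gR nu mu t c y.
Proof.
  unfold gR. replace (Cmod (c, - y)) with (Cmod (c, y)) by (unfold Cmod; simpl; f_equal; ring).
  replace (- y / c) with (- (y / c)) by (field; lra). rewrite atan_opp.
  unfold FA, FB. replace (nu * - atan (y / c)) with (- (nu * atan (y / c))) by ring.
  rewrite !cos_neg, !sin_neg. rewrite <- (cos_neg (_ - _ - _)). f_equal. f_equal. ring.
Qed.

Lemma gI_odd y : gI nu mu t c (- y) = - gI nu mu t c y.
Proof.
  unfold gI. replace (Cmod (c, - y)) with (Cmod (c, y)) by (unfold Cmod; simpl; f_equal; ring).
  replace (- y / c) with (- (y / c)) by (field; lra). rewrite atan_opp.
  unfold FA, FB. replace (nu * - atan (y / c)) with (- (nu * atan (y / c))) by ring.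
  rewrite !cos_neg, !sin_neg.
  replace (t * Cmod (c, y) * - sin (atan (y / c)) - mu * - atan (y / c) - pw (Cmod (c, y)) nu * - sin (nu * atan (y / c)))
    with (- (t * Cmod (c, y) * sin (atan (y / c)) - mu * atan (y / c) - pw (Cmod (c, y)) nu * sin (nu * atan (y / c)))) by ring.
  rewrite sin_neg. ring.
Qed.

Lemma symR (f : R -> R) a : (forall y, continuous f y) -> (forall y, f (- y) = f y) -> RInt f a 0 = RInt f 0 (- a).
Proof.
  intros Hf Hs.
  assert (Ex : forall u v, ex_RInt f u v) by (intros; apply exR; intros; apply Hf).
  assert (H1 := is_RInt_comp_opp (V:=R_NormedModule) f a 0 _ (RInt_correct (V:=R_CompleteNormedModule) f _ _ (Ex (-a) (-0)))).
  apply (is_RInt_unique (V:=R_CompleteNormedModule)) in H1. rewrite (RInt_ext _ (fun y => opp (f y))) in H1.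
  2:{ intros; now rewrite Hs. }
  rewrite (RInt_opp (V:=R_CompleteNormedModule)) in H1 by auto.
  rewrite Ropp_0 in H1. rewrite <- (opp_RInt_swap (V:=R_CompleteNormedModule) f 0 (- a)) in H1 by auto.
  unfold opp in H1; simpl in H1. lra.
Qed.

Lemma symI (f : R -> R) a : (forall y, continuous f y) -> (forall y, f (- y) = - f y) -> RInt f a 0 = - RInt f 0 (- a).
Proof.
  intros Hf Hs.
  assert (Ex : forall u v, ex_RInt f u v) by (intros; apply exR; intros; apply Hf).
  assert (H1 := is_RInt_comp_opp (V:=R_NormedModule) f a 0 _ (RInt_correct (V:=R_CompleteNormedModule) f _ _ (Ex (-a) (-0)))).
  apply (is_RInt_unique (V:=R_CompleteNormedModule)) in H1. rewrite (RInt_ext _ f) in H1.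
  2:{ intros; rewrite Hs. unfold opp; simpl. ring. }
  rewrite Ropp_0 in H1. rewrite <- (opp_RInt_swap (V:=R_CompleteNormedModule) f 0 (- a)) in H1 by auto.
  unfold opp in H1; simpl in H1. lra.
Qed.

Lemma brom_gen LR LI :
  (forall e, 0 < e -> exists M, 1 <= M /\ forall Y, M <= Y -> Rabs (RInt (gR nu mu t c) 0 Y - LR) < e) ->
  (forall e, 0 < e -> exists M, 1 <= M /\ forall Y, M <= Y -> Rabs (RInt (gI nu mu t c) 0 Y - LI) < e) ->
  is_RInt_gen (bromwich_integrand nu mu c t) (Rbar_locally m_infty) (Rbar_locally p_infty) (RtoC (LR / PI)).
Proof.
  intros HLR HLI P [e He]. pose proof PI_RGT_0 as HPI. pose proof (cond_pos e) as He0.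
  set (d := PI * e). assert (Hd : 0 < d) by (unfold d; nra).
  destruct (HLR d Hd) as [M1 [_ HM1]]. destruct (HLI d Hd) as [M2 [_ HM2]].
  pose proof (Rmax_l M1 M2). pose proof (Rmax_r M1 M2). set (M := Rmax M1 M2) in *.
  apply Filter_prod with (Q := fun a => a < - M) (R := fun b => M < b).
  - exists (- M). auto.
  - exists M. auto.
  - intros a b Ha Hb. simpl.
    assert (ExR : forall u v, ex_RInt (gR nu mu t c) u v) by (intros; apply exR; intros; apply gR_cont; auto).
    assert (ExI : forall u v, ex_RInt (gI nu mu t c) u v) by (intros; apply exR; intros; apply gI_cont; auto).
    exists (/ (2 * PI) * RInt (gR nu mu t c) a b, / (2 * PI) * RInt (gI nu mu t c) a b). split.
    + apply (is_RInt_ext (fun y => (/ (2 * PI) * gR nu mu t c y, / (2 * PI) * gI nu mu t c y))).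
      { intros x _. symmetry. apply brom_eq. auto. }
      apply is_RInt_fct_extend_pair; simpl.
      * exact (is_RInt_scal (V:=R_NormedModule) _ a b (/ (2 * PI)) _ (RInt_correct (V:=R_CompleteNormedModule) _ a b (ExR a b))).
      * exact (is_RInt_scal (V:=R_NormedModule) _ a b (/ (2 * PI)) _ (RInt_correct (V:=R_CompleteNormedModule) _ a b (ExI a b))).
    + apply He. split.
      * change (Rabs (/ (2 * PI) * RInt (gR nu mu t c) a b - LR / PI) < e).
        rewrite <- (RInt_Chasles (V:=R_CompleteNormedModule) _ a 0 b) by auto.
        rewrite (symR (gR nu mu t c) a (gR_cont nu mu t c Hc) gR_even). unfold plus; simpl.
        assert (A1 := HM1 (- a) ltac:(lra)). assert (A2 := HM1 b ltac:(lra)).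
        revert A1 A2. generalize (RInt (gR nu mu t c) 0 (- a)) (RInt (gR nu mu t c) 0 b). simpl. intros X Y A1 A2.
        replace (/ (2 * PI) * (X + Y) - LR / PI) with (((X - LR) + (Y - LR)) / (2 * PI)) by (field; lra).
        unfold Rdiv. rewrite Rabs_mult, (Rabs_pos_eq (/ (2 * PI))) by (apply Rlt_le, Rinv_0_lt_compat; lra).
        apply Rmult_lt_reg_r with (2 * PI). lra. rewrite Rmult_assoc, Rinv_l, Rmult_1_r by lra.
        pose proof (Rabs_triang (X - LR) (Y - LR)). unfold d in *. lra.
      * change (Rabs (/ (2 * PI) * RInt (gI nu mu t c) a b - 0) < e).
        rewrite <- (RInt_Chasles (V:=R_CompleteNormedModule) _ a 0 b) by auto.
        rewrite (symI (gI nu mu t c) a (gI_cont nu mu t c Hc) gI_odd). unfold plus; simpl.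
        assert (A1 := HM2 (- a) ltac:(lra)). assert (A2 := HM2 b ltac:(lra)).
        revert A1 A2. generalize (RInt (gI nu mu t c) 0 (- a)) (RInt (gI nu mu t c) 0 b). simpl. intros X Y A1 A2.
        replace (/ (2 * PI) * (- X + Y) - 0) with (((Y - LI) - (X - LI)) / (2 * PI)) by (field; lra).
        unfold Rdiv. rewrite Rabs_mult, (Rabs_pos_eq (/ (2 * PI))) by (apply Rlt_le, Rinv_0_lt_compat; lra).
        apply Rmult_lt_reg_r with (2 * PI). lra. rewrite Rmult_assoc, Rinv_l, Rmult_1_r by lra.
        pose proof (Rabs_triang (Y - LI) (- (X - LI))). rewrite Rabs_Ropp in H1. unfold d in *. unfold Rminus in *. lra.
Qed.

End Main.

Theorem mainTheorem1 (nu mu t c : R) :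
  0 < nu < 1 -> 0 <= mu < 1 -> 0 < t -> 0 < c ->
  exists I : R,
    is_RInt_gen (rhs_integrand nu mu t) (at_right 0) (Rbar_locally p_infty) I /\
    inv_laplace_value nu mu c t (RtoC I).
Proof.
  intros Hnu Hmu Ht Hc.
  destruct (conv (gR nu mu t c) (Kg nu t c) (gR_cont nu mu t c Hc)
    (fun y Hy => gR_bound nu mu t c Hnu Hmu Hc y Hy)) as [LR HLR].
  destruct (conv (gI nu mu t c) (Kg nu t c) (gI_cont nu mu t c Hc)
    (fun y Hy => gI_bound nu mu t c Hnu Hmu Hc y Hy)) as [LI HLI].
  exists (LR / PI). split.
  - apply (rhs_gen nu mu t c); auto.
  - unfold inv_laplace_value. apply (brom_gen nu mu t c Hc LR LI); auto.
Qed.
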